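(* Let $M$ be an $\mathfrak{S}_2$-module, where $\mathfrak{S}_2:=\mathbb{Z}[s,t]/\bigl((1-s)(1-t),\,N(s)+N(t)-p\bigr)$, and write $s,t$ also for their actions on $M$. The following are equivalent: (1) $M$ is uniquely $p$-divisible; (2) $M$ is cohomologically trivial and $M=\ker(1-s)\oplus\ker(1-t)$; (3) $1-s$ restricts to an invertible map $\ker(1-t)\to\ker(1-t)$ and $1-t$ restricts to an invertible map $\ker(1-s)\to\ker(1-s)$.
   Context: $p$ is a prime and $N(x)=1+x+\dots+x^{p-1}$. An $\mathfrak{S}_2$-module is cohomologically trivial if $\operatorname{im}(1-t)=\ker(1-s)$ and $\operatorname{im}(1-s)=\ker(1-t)$. Uniquely $p$-divisible: multiplication by $p$ is bijective. *)

(* Defs.v *)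
From HB Require Import structures.
From mathcomp Require Import all_boot all_order all_algebra.
Set Implicit Arguments. Unset Strict Implicit. Unset Printing Implicit Defensive.
Import GRing.Theory.
Local Open Scope ring_scope.

Section S2.
Variable M : zmodType.

Definition Nact (p : nat) (f : M -> M) (m : M) : M := \sum_(i < p) iter i f m.

Definition ker1m (f : M -> M) (m : M) : Prop := m - f m = 0.
Definition im1m (f : M -> M) (m : M) : Prop := exists y, m = y - f y.

(* M is an S_2-module, S_2 = Z[s,t]/((1-s)(1-t), N(s)+N(t)-p), with s,t acting
   by the additive maps s,t: these commute (Z[s,t] is commutative) and satisfy
   the two defining relations. *)
Definition S2_module (p : nat) (s t : {additive M -> M}) : Prop :=
  [/\ forall m, s (t m) = t (s m),
      forall m, (m - s m) - t (m - s m) = 0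
    & forall m, Nact p s m + Nact p t m = m *+ p].

Definition uniquely_p_divisible (p : nat) : Prop := bijective (fun m : M => m *+ p).

Definition cohomologically_trivial (s t : M -> M) : Prop :=
  (forall m, im1m t m <-> ker1m s m) /\ (forall m, im1m s m <-> ker1m t m).

Definition internal_direct_sum (A B : M -> Prop) : Prop :=
  (forall m, exists a b, [/\ A a, B b & m = a + b]) /\
  (forall m, A m -> B m -> m = 0).

Definition restricts_invertible (f : M -> M) (K : M -> Prop) : Prop :=
  [/\ forall x, K x -> K (f x),
      forall x y, K x -> K y -> f x = f y -> x = y
    & forall y, K y -> exists2 x, K x & f x = y].

End S2.

(* Main.v *)
Require Import Defs.
From mathcomp Require Import all_boot all_order all_algebra ring.
Set Implicit Arguments. Unset Strict Implicit. Unset Printing Implicit Defensive.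
Import GRing.Theory.
Local Open Scope ring_scope.

Section Work.
Variables (M : zmodType) (s t : {additive M -> M}).

Lemma fB (f : {additive M -> M}) x y : (x - y) - f (x - y) = (x - f x) - (y - f y).
Proof. rewrite raddfB !opprB addrACA [RHS]addrACA [-y + _]addrC. done. Qed.

Lemma fD (f : {additive M -> M}) x y : (x + y) - f (x + y) = (x - f x) + (y - f y).
Proof. by rewrite raddfD opprD addrACA. Qed.

Lemma f0 (f : {additive M -> M}) : 0 - f 0 = 0 :> M.
Proof. by rewrite raddf0 subr0. Qed.

Lemma fsum (f : {additive M -> M}) I (r : seq I) (P : pred I) (F : I -> M) :
  (\sum_(i <- r | P i) F i) - f (\sum_(i <- r | P i) F i) = \sum_(i <- r | P i) (F i - f (F i)).
Proof. by rewrite raddf_sum sumrB. Qed.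

Lemma fMn (f : {additive M -> M}) x n : (x *+ n) - f (x *+ n) = (x - f x) *+ n.
Proof. by rewrite raddfMn mulrnBl. Qed.

Lemma kerP (f : M -> M) x : ker1m f x <-> f x = x.
Proof. rewrite /ker1m; split=> [H|->]; [by apply/eqP; rewrite eq_sym -subr_eq0 H | by rewrite subrr]. Qed.

Lemma iter_add (f : {additive M -> M}) k x : iter k f (x *+ 1) = iter k f x.
Proof. by []. Qed.

Lemma iterMn (f : {additive M -> M}) k x n : iter k f (x *+ n) = iter k f x *+ n.
Proof. elim: k => //= k ->; by rewrite raddfMn. Qed.

Lemma iterMz (f : {additive M -> M}) k x z : iter k f (x *~ z) = iter k f x *~ z.
Proof. elim: k => //= k ->; by rewrite raddfMz. Qed.

Definition c n k : int := (-1) ^+ k * ('C(n, k))%:Z.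

Lemma cS n k : c n.+1 k.+1 = c n k.+1 - c n k.
Proof. rewrite /c binS PoszD exprS; ring. Qed.

Lemma iterA n x : iter n (fun m => m - s m) x = \sum_(k < n.+1) iter k s x *~ c n k.
Proof.
elim: n => [|n IH]; first by rewrite big_ord1 /c /= mulr1z.
rewrite iterS IH.
set S := fun i => iter i s x.
have e1 : s (\sum_(k < n.+1) S k *~ c n k) = \sum_(i < n.+1) S i.+1 *~ c n i.
  by rewrite raddf_sum; apply: eq_bigr => i _; rewrite raddfMz.
have e2 : \sum_(k < n.+1) S k *~ c n k = x *~ c n 0 + \sum_(i < n) S i.+1 *~ c n i.+1.
  by rewrite big_ord_recl.
have e3 : \sum_(i < n.+1) S i.+1 *~ c n i.+1 = \sum_(i < n) S i.+1 *~ c n i.+1.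
  by rewrite big_ord_recr /= /c bin_small // mulr0 mulr0z addr0.
have e4 : \sum_(k < n.+2) S k *~ c n.+1 k = x *~ c n 0 + (\sum_(i < n.+1) S i.+1 *~ c n i.+1 - \sum_(i < n.+1) S i.+1 *~ c n i).
  rewrite big_ord_recl -sumrB; congr (_ + _); first by rewrite /c !bin0.
  by apply: eq_bigr => i _; rewrite cS mulrzBr.
rewrite e4 e3 e1 e2 addrA; done.
Qed.

Definition hh (p : nat) x := \sum_(k < p.-1) iter k.+1 s x *~ ((-1) ^+ k.+1 * ('C(p, k.+1) %/ p)%:Z)
  + x *~ (p == 2%N)%:Z.

Lemma iterAp p x : prime p -> iter p s x = x -> iter p (fun m => m - s m) x = hh p x *~ p%:Z.
Proof.
move=> pr sp.
have e : (1 + (-1) ^+ p = (p == 2%N)%:Z * p%:Z :> int).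
  case: (even_prime pr) => [->//|op].
  have p2 : (p == 2%N) = false by apply/eqP => p2; rewrite p2 in op.
  by rewrite -signr_odd op p2 mul0r expr1 subrr.
rewrite iterA /hh.
move: (prime_gt1 pr) sp e; case: p pr => [|[|q]] //= pr _ sp e.
rewrite big_ord_recl big_ord_recr /= sp.
rewrite mulrzDl mulrz_suml.
have mid : \sum_(i < q.+1) s (iter (0 + i) s x) *~ c q.+2 (bump 0 i) =
  \sum_(i < q.+1) s (iter i s x) *~ ((-1) ^+ i.+1 * (('C(q.+2, i.+1) %/ q.+2)%N)%:Z) *~ q.+2.
  apply: eq_bigr => i _; rewrite add0n -mulrzA; congr (_ *~ _).
  rewrite /c -mulrA -PoszM divnK //; apply: prime_dvd_bin => //.
  by rewrite /= ltnS ltn_ord.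
rewrite mid addrCA addrA -addrA; congr (_ + _).
rewrite -mulrzDr -mulrzA -e; congr (_ *~ _).
by rewrite /c !bin0 binn !mulr1 expr0 /bump /= add1n.
Qed.

Lemma mulrnz (y : M) n z : (y *+ n) *~ z = (y *~ z) *+ n.
Proof. by rewrite !pmulrn -!mulrzA mulrC. Qed.

Lemma hMn p x n : hh p (x *+ n) = hh p x *+ n.
Proof.
rewrite /hh mulrnDl -sumrMnl mulrnz; congr (_ + _).
by apply: eq_bigr => i _; rewrite iterMn mulrnz.
Qed.

Lemma hh0 p : hh p 0 = 0.
Proof. by have := hMn p 0 0; rewrite !mulr0n. Qed.

Lemma iter_comm k x : (forall m, s (t m) = t (s m)) -> t (iter k s x) = iter k s (t x).
Proof. by move=> st; elim: k => //= k <-; rewrite st. Qed.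

Lemma hh_comm p x : (forall m, s (t m) = t (s m)) -> t (hh p x) = hh p (t x).
Proof.
move=> st; rewrite /hh raddfD raddf_sum; congr (_ + _); last by rewrite raddfMz.
by apply: eq_bigr => i _; rewrite raddfMz iter_comm.
Qed.

Lemma ker0 (f : {additive M -> M}) : ker1m f 0.
Proof. exact: f0. Qed.

Lemma kerB (f : {additive M -> M}) x y : ker1m f x -> ker1m f y -> ker1m f (x - y).
Proof. by rewrite /ker1m fB => -> ->; rewrite subrr. Qed.

Lemma kerD (f : {additive M -> M}) x y : ker1m f x -> ker1m f y -> ker1m f (x + y).
Proof. by rewrite /ker1m fD => -> ->; rewrite addr0. Qed.

Lemma kersum (f : {additive M -> M}) n (F : 'I_n -> M) :
  (forall i, ker1m f (F i)) -> ker1m f (\sum_(i < n) F i).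
Proof. by move=> H; rewrite /ker1m fsum; apply: big1 => i _; exact: H. Qed.

Lemma tele w i : w - iter i s w = (\sum_(j < i) iter j s w) - s (\sum_(j < i) iter j s w).
Proof.
elim: i => [|i IH]; first by rewrite big_ord0 subrr f0.
by rewrite big_ord_recr /= fD -IH addrA subrK.
Qed.

Section Hyps.
Variable p : nat.
Hypothesis pr : prime p.
Hypothesis hS : S2_module p s t.

Lemma st m : s (t m) = t (s m). Proof. by case: hS => H _ _; exact: H. Qed.
Lemma ba m : ker1m t (m - s m). Proof. by case: hS => _ H _; exact: H. Qed.
Lemma ab m : ker1m s (m - t m).
Proof.
have := ba m; rewrite /ker1m (raddfB t) (raddfB s) st => H.
rewrite -[RHS]H !opprB addrACA [RHS]addrACA; congr (_ + _); exact: addrC.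
Qed.

Lemma Kiter j x : ker1m t x -> ker1m t (iter j s x).
Proof. by move/kerP=> tx; apply/kerP; rewrite iter_comm ?tx //; exact: st. Qed.

Lemma NK x : ker1m t x -> Nact p s x = 0.
Proof.
move/kerP=> tx; case: hS => _ _ /(_ x).
have -> : Nact p t x = x *+ p.
  rewrite /Nact -[in RHS](card_ord p) -sumr_const; apply: eq_bigr => i _.
  by elim: (nat_of_ord i) => //= k ->.
by move/(congr1 (fun y => y - x *+ p)); rewrite addrK subrr.
Qed.

Lemma spK x : ker1m t x -> iter p s x = x.
Proof.
move=> Kx; have := tele x p; rewrite -/(Nact p s x) NK // f0 => /eqP.
by rewrite subr_eq0 => /eqP.
Qed.

Lemma hhK x : ker1m t x -> ker1m t (hh p x).
Proof. by move/kerP=> tx; apply/kerP; rewrite hh_comm ?tx //; exact: st. Qed.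

Lemma L1 : bijective (fun m : M => m *+ p) -> restricts_invertible (fun m => m - s m) (ker1m t).
Proof.
move=> bij; have finj := bij_inj bij; split.
- by move=> x _; exact: ba.
- move=> x y Kx Ky e.
  have Kw : ker1m t (x - y) by exact: kerB.
  have /kerP aw : ker1m s (x - y) by rewrite /ker1m fB e subrr.
  have Nw : Nact p s (x - y) = (x - y) *+ p.
    rewrite /Nact -[in RHS](card_ord p) -sumr_const; apply: eq_bigr => i _.
    by elim: (nat_of_ord i) => //= k ->.
  have : (x - y) *+ p = 0 *+ p by rewrite -Nw NK // mul0rn.
  by move/finj/eqP; rewrite subr_eq0 => /eqP.
- move=> y Ky; case: bij => g gK Kg.
  set w := g y; have wy : w *+ p = y by rewrite /w Kg.
  have Kw : ker1m t w.
    apply: (can_inj gK); rewrite /= mul0rn -fMn wy; exact: Ky.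
  exists (\sum_(i < p) \sum_(j < i) iter j s w).
    by apply: kersum => i; apply: kersum => j; exact: Kiter.
  rewrite fsum; under eq_bigr => i _ do rewrite -tele.
  by rewrite sumrB -/(Nact p s w) NK // subr0 sumr_const card_ord.
Qed.

Lemma L2 : restricts_invertible (fun m => m - s m) (ker1m t) ->
  (forall x, ker1m t x -> x *+ p = 0 -> x = 0) /\ (forall y, ker1m t y -> exists2 x, ker1m t x & x *+ p = y).
Proof.
case=> aK ainj asurj.
have iterK : forall n x, ker1m t x -> ker1m t (iter n (fun m => m - s m) x).
  by move=> n x Kx; elim: n => //= n IH; exact: aK.
have iterinj : forall n x, ker1m t x -> iter n (fun m => m - s m) x = 0 -> x = 0.
  move=> n x Kx; elim: n => // n IH /= e; apply: IH.
  by apply: ainj; [exact: iterK | exact: ker0 | rewrite e f0].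
have itersurj : forall n y, ker1m t y -> exists2 x, ker1m t x & iter n (fun m => m - s m) x = y.
  move=> n; elim: n => [y Ky|n IH y Ky]; first by exists y.
  case: (IH y Ky) => x Kx <-; case: (asurj x Kx) => z Kz <-.
  by exists z => //; rewrite iterSr.
split.
- move=> x Kx px; apply: (iterinj p) => //.
  by rewrite iterAp ?spK // -pmulrn -hMn px hh0.
- move=> y Ky; case: (itersurj p y Ky) => z Kz <-.
  by exists (hh p z); [exact: hhK | rewrite iterAp ?spK // pmulrn].
Qed.


Lemma decomp : restricts_invertible (fun m => m - t m) (ker1m s) ->
  forall m, exists a b, [/\ ker1m s a, ker1m t b & m = a + b].
Proof.
case=> _ _ bsurj m; case: (bsurj (m - t m) (ab m)) => y Ky e.
exists y, (m - y); split => //; first by rewrite /ker1m fB e subrr.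
by rewrite addrC subrK.
Qed.

Lemma inter : restricts_invertible (fun m => m - s m) (ker1m t) ->
  forall m, ker1m s m -> ker1m t m -> m = 0.
Proof.
case=> _ ainj _ m Ks Kt; apply: ainj => //; [exact: ker0 | by rewrite Ks f0].
Qed.

Lemma coh_half : restricts_invertible (fun m => m - t m) (ker1m s) ->
  forall m, im1m t m <-> ker1m s m.
Proof.
move=> [_ _ bsurj] m; split => [[y ->]|Km]; first exact: ab.
by case: (bsurj m Km) => y _ e; exists y.
Qed.

Lemma half23 : (forall m, im1m s m <-> ker1m t m) -> internal_direct_sum (ker1m s) (ker1m t) ->
  restricts_invertible (fun m => m - s m) (ker1m t).
Proof.
move=> coh [dec int]; split.
- by move=> x _; exact: ba.
- move=> x y Kx Ky e; have : x - y = 0.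
    by apply: int; [rewrite /ker1m fB e subrr | exact: kerB].
  by move/eqP; rewrite subr_eq0 => /eqP.
- move=> y Ky; case: (proj2 (coh y) Ky) => z ->.
  case: (dec z) => u [v [Ku Kv ->]]; exists v => //.
  by rewrite fD Ku add0r.
Qed.
End Hyps.
End Work.

Lemma S2_sym (p : nat) (M : zmodType) (s t : {additive M -> M}) :
  S2_module p s t -> S2_module p t s.
Proof.
move=> hS; split; first by move=> m; rewrite (st hS).
- exact: ab hS.
- by case: hS => _ _ N m; rewrite addrC.
Qed.

Lemma ids_sym (M : zmodType) (A B : M -> Prop) : internal_direct_sum A B -> internal_direct_sum B A.
Proof.
case=> dec int; split; last by move=> m Bm Am; exact: int.
by move=> m; case: (dec m) => a [b [Aa Bb ->]]; exists b, a; split => //; rewrite addrC.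
Qed.

Theorem proposition7p7 (p : nat) (M : zmodType) (s t : {additive M -> M}) :
  prime p -> S2_module p s t ->
  [/\ (uniquely_p_divisible M p <->
        cohomologically_trivial s t /\ internal_direct_sum (ker1m s) (ker1m t)),
      (cohomologically_trivial s t /\ internal_direct_sum (ker1m s) (ker1m t) <->
        restricts_invertible (fun m => m - s m) (ker1m t) /\
        restricts_invertible (fun m => m - t m) (ker1m s))
    & (uniquely_p_divisible M p <->
        restricts_invertible (fun m => m - s m) (ker1m t) /\
        restricts_invertible (fun m => m - t m) (ker1m s))].
Proof.
move=> pr hS; have hS' := S2_sym hS.
have h13 : uniquely_p_divisible M p -> restricts_invertible (fun m => m - s m) (ker1m t) /\
        restricts_invertible (fun m => m - t m) (ker1m s).
  by move=> bij; split; [exact: L1 hS bij | exact: L1 hS' bij].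
have h31 : restricts_invertible (fun m => m - s m) (ker1m t) /\
        restricts_invertible (fun m => m - t m) (ker1m s) -> uniquely_p_divisible M p.
  case=> ra rb.
  have [inj1 surj1] := L2 pr hS ra.
  have [inj2 surj2] := L2 pr hS' rb.
  have inj : forall x : M, x *+ p = 0 -> x = 0.
    move=> x px; have Kb : ker1m s (x - t x) := ab hS x.
    have bx : x - t x = 0 by apply: inj2 => //; rewrite -fMn px f0.
    exact: inj1.
  have surj : forall y : M, exists x : M, x *+ p == y.
    move=> y; case: (decomp hS rb y) => u [v [Ku Kv ->]].
    case: (surj2 u Ku) => u' _ <-; case: (surj1 v Kv) => v' _ <-.
    by exists (u' + v'); rewrite mulrnDl.
  exists (fun y => xchoose (surj y)).
  - move=> x; move/eqP: (xchooseP (surj (x *+ p))) => e.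
    apply/eqP; rewrite -subr_eq0; apply/eqP; apply: inj.
    by rewrite mulrnBl e subrr.
  - by move=> y; exact: eqP (xchooseP (surj y)).
have h32 : restricts_invertible (fun m => m - s m) (ker1m t) /\
        restricts_invertible (fun m => m - t m) (ker1m s) ->
        cohomologically_trivial s t /\ internal_direct_sum (ker1m s) (ker1m t).
  case=> ra rb; split; split.
  - exact: coh_half hS rb.
  - exact: coh_half hS' ra.
  - exact: decomp hS rb.
  - exact: inter ra.
have h23 : cohomologically_trivial s t /\ internal_direct_sum (ker1m s) (ker1m t) ->
        restricts_invertible (fun m => m - s m) (ker1m t) /\
        restricts_invertible (fun m => m - t m) (ker1m s).
  case=> [[c1 c2] ids]; split; first exact: half23 hS c2 ids.
  exact: half23 hS' c1 (ids_sym ids).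
split; split; auto.
Qed.
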